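(* With the matrices defined in the context, the Neumann Schur complement $S_N:=\mathbf{B}\mathbf{A_N}^{-1}\mathbf{B}^T$ satisfies $S_N^\dagger=S_N$.
   Context: Fix an integer $n\ge 2$ and set $h=1/n$. Let $I_m$ denote the $m\times m$ identity matrix and $\otimes$ the Kronecker product. Let $\mathrm{B}\in\mathbb{R}^{n\times(n-1)}$ be $\mathrm{B}=\frac1h M$, where $M_{i,i}=1$ and $M_{i+1,i}=-1$ for $1\le i\le n-1$, all other entries $0$. Define $\mathrm{B}^u_x=I_n\otimes \mathrm{B}$, $\mathrm{B}^v_y=\mathrm{B}\otimes I_n$, $\mathrm{B}^q_x=I_{n-1}\otimes\mathrm{B}$, $\mathrm{B}^q_y=\mathrm{B}\otimes I_{n-1}$. Let $\mathbf{B}=\begin{bmatrix}-\mathrm{B}^u_x & -\mathrm{B}^v_y\end{bmatrix}\in\mathbb{R}^{n^2\times 2n(n-1)}$ and $\mathbf{C}=\begin{bmatrix}-(\mathrm{B}^q_y)^T & (\mathrm{B}^q_x)^T\end{bmatrix}\in\mathbb{R}^{(n-1)^2\times 2n(n-1)}$, and let $\mathbf{A_N}=\mathbf{B}^T\mathbf{B}+\mathbf{C}^T\mathbf{C}$ (which is invertible). The superscript $\dagger$ denotes the Moore–Penrose pseudoinverse. *)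

(* Defs.v *)
From mathcomp Require Import all_boot all_order all_algebra.
From mathcomp Require Import boolp classical_sets reals.
Set Implicit Arguments. Unset Strict Implicit. Unset Printing Implicit Defensive.
Import Order.TTheory GRing.Theory Num.Theory.
Local Open Scope ring_scope.

(* ---------- Kronecker product with the standard index convention ----------
   (A ⊗ B)_{(a p + c), (b q + d)} = A_{a b} * B_{c d},
   for A : m x n, B : p x q, 0-based row index i = a*p + c, column j = b*q + d. *)

Lemma kron_div_lt (m p : nat) (i : 'I_(m * p)) : (i %/ p < m)%N.
Proof.
case: p i => [|p] i; first by case: i => i; rewrite muln0.
by rewrite ltn_divLR // ltn_ord.
Qed.

Lemma kron_mod_lt (m p : nat) (i : 'I_(m * p)) : (i %% p < p)%N.
Proof.
case: p i => [|p] i; first by case: i => i; rewrite muln0.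
by rewrite ltn_mod.
Qed.

Definition kdiv (m p : nat) (i : 'I_(m * p)) : 'I_m := Ordinal (kron_div_lt i).
Definition kmod (m p : nat) (i : 'I_(m * p)) : 'I_p := Ordinal (kron_mod_lt i).

Definition kron (R : pzRingType) (m n p q : nat)
  (A : 'M[R]_(m, n)) (B : 'M[R]_(p, q)) : 'M[R]_(m * p, n * q) :=
  \matrix_(i, j) (A (kdiv i) (kdiv j) * B (kmod i) (kmod j)).

Definition is_MP_pinv (R : realType) (m n : nat)
  (A : 'M[R]_(m, n)) (X : 'M[R]_(n, m)) : Prop :=
  [/\ A *m X *m A = A, X *m A *m X = X,
      (A *m X)^T = A *m X & (X *m A)^T = X *m A].

(* The pseudoinverse A^† : the (unique, existing) matrix satisfying the
   Penrose conditions, selected by classical choice. *)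
Definition pinv (R : realType) (m n : nat) (A : 'M[R]_(m, n)) : 'M[R]_(n, m) :=
  xget 0 [set X | is_MP_pinv A X].

Section Mats.
Variables (R : realType) (n : nat).

(* M in R^{n x (n-1)}: M_{i,i} = 1, M_{i+1,i} = -1 (1-based), i.e. 0-based
   M i j = 1 if i = j, -1 if i = j+1, 0 otherwise. *)
Definition Mdiff : 'M[R]_(n, n.-1) :=
  \matrix_(i, j) ((i == j :> nat)%:R - (i == j.+1 :> nat)%:R).

(* B = (1/h) M with h = 1/n *)
Definition Bd : 'M[R]_(n, n.-1) := (1 / (1 / n%:R)) *: Mdiff.

Definition Bux : 'M[R]_(n * n, n * n.-1) := kron (1%:M : 'M[R]_n) Bd.
Definition Bvy : 'M[R]_(n * n, n.-1 * n) := kron Bd (1%:M : 'M[R]_n).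
Definition Bqx : 'M[R]_(n.-1 * n, n.-1 * n.-1) := kron (1%:M : 'M[R]_n.-1) Bd.
Definition Bqy : 'M[R]_(n * n.-1, n.-1 * n.-1) := kron Bd (1%:M : 'M[R]_n.-1).

Definition Bbold : 'M[R]_(n * n, n * n.-1 + n * n.-1) :=
  row_mx (- Bux) (castmx (erefl _, mulnC n.-1 n) (- Bvy)).

Definition Cbold : 'M[R]_(n.-1 * n.-1, n * n.-1 + n * n.-1) :=
  row_mx (- Bqy^T) (castmx (erefl _, mulnC n.-1 n) (Bqx^T)).

Definition AN : 'M[R]_(n * n.-1 + n * n.-1) := Bbold^T *m Bbold + Cbold^T *m Cbold.

Definition SN : 'M[R]_(n * n) := Bbold *m invmx AN *m Bbold^T.

End Mats.

(* Main.v *)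
Require Import Defs.
From mathcomp Require Import all_boot all_order all_algebra.
From mathcomp Require Import boolp classical_sets reals.
From mathcomp Require Import ring lra zify.
Set Implicit Arguments. Unset Strict Implicit. Unset Printing Implicit Defensive.
Import Order.TTheory GRing.Theory Num.Theory.
Local Open Scope ring_scope.

Lemma kp_lt (a b : nat) (i : 'I_a) (j : 'I_b) : (i * b + j < a * b)%N.
Proof. have := ltn_ord i; have := ltn_ord j; nia. Qed.

Definition kp (a b : nat) (i : 'I_a) (j : 'I_b) : 'I_(a * b) := Ordinal (kp_lt i j).

Lemma kdiv_kp a b (i : 'I_a) (j : 'I_b) : kdiv (kp i j) = i.
Proof.
apply: val_inj => /=; have jb := ltn_ord j.
by rewrite divnMDl ?divn_small ?addn0 //; lia.
Qed.

Lemma kmod_kp a b (i : 'I_a) (j : 'I_b) : kmod (kp i j) = j.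
Proof. by apply: val_inj => /=; rewrite modnMDl modn_small. Qed.

Lemma kp_kdiv a b (k : 'I_(a * b)) : kp (kdiv k) (kmod k) = k.
Proof. by apply: val_inj => /=; rewrite -divn_eq. Qed.

Section Gen.
Variable R : realType.

Lemma sum_kp a b (F : 'I_(a * b) -> R) :
  \sum_(k < a * b) F k = \sum_(i < a) \sum_(j < b) F (kp i j).
Proof.
rewrite pair_bigA /=.
rewrite (reindex (fun p : 'I_a * 'I_b => kp p.1 p.2)) //=.
exists (fun k => (kdiv k, kmod k)) => [[i j] _ | k _] /=.
  by rewrite kdiv_kp kmod_kp.
by rewrite kp_kdiv.
Qed.

Definition vec a b (X : 'M[R]_(a, b)) : 'cV[R]_(a * b) := \col_k X (kdiv k) (kmod k).
Definition unvec a b (v : 'cV[R]_(a * b)) : 'M[R]_(a, b) := \matrix_(i, j) v (kp i j) 0.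

Lemma vecK a b (v : 'cV[R]_(a * b)) : vec (unvec v) = v.
Proof. by apply/matrixP => k z; rewrite !mxE kp_kdiv ord1. Qed.

Lemma unvecK a b (X : 'M[R]_(a, b)) : unvec (vec X) = X.
Proof. by apply/matrixP => i j; rewrite !mxE kdiv_kp kmod_kp. Qed.

Lemma kron_vec m n p q (A : 'M[R]_(m, n)) (B : 'M[R]_(p, q)) (X : 'M[R]_(n, q)) :
  kron A B *m vec X = vec (A *m X *m B^T).
Proof.
apply/matrixP => k z; rewrite /kron /vec !mxE sum_kp.
under eq_bigr => i _ do under eq_bigr => j _ do rewrite !mxE kdiv_kp kmod_kp.
rewrite exchange_big /=; apply: eq_bigr => j _.
rewrite !mxE big_distrl /=; apply: eq_bigr => i _; ring.
Qed.

Lemma kron_mul m n p q r s (A : 'M[R]_(m, n)) (B : 'M[R]_(p, q))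
  (C : 'M[R]_(n, r)) (D : 'M[R]_(q, s)) :
  kron A B *m kron C D = kron (A *m C) (B *m D).
Proof.
apply/matrixP => k l; rewrite !mxE sum_kp big_distrl /=.
apply: eq_bigr => i _; rewrite big_distrr /=; apply: eq_bigr => j _.
rewrite /kron !mxE kdiv_kp kmod_kp; ring.
Qed.

Lemma kron_tr m n p q (A : 'M[R]_(m, n)) (B : 'M[R]_(p, q)) :
  (kron A B)^T = kron A^T B^T.
Proof. by apply/matrixP => i j; rewrite !mxE. Qed.

Lemma cast_mulr p q q' r (e : q = q') (M : 'M[R]_(p, q)) (x : 'M[R]_(q', r)) :
  castmx (erefl p, e) M *m x = M *m castmx (esym e, erefl r) x.
Proof. by case: q' / e x => x; rewrite !castmx_id. Qed.

Lemma cast_mul2 p q q' r (e : q = q') (M : 'M[R]_(p, q)) (N : 'M[R]_(q, r)) :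
  castmx (erefl p, e) M *m castmx (e, erefl r) N = M *m N.
Proof. by case: q' / e; rewrite !castmx_id. Qed.

Lemma sqnorm_eq0 k (x : 'cV[R]_k) : x^T *m x = 0 -> x = 0.
Proof.
move=> /matrixP /(_ 0 0); rewrite !mxE => H.
have {}H : \sum_(i < k) x i 0 * x i 0 = 0.
  by rewrite -[RHS]H; apply: eq_bigr => i _; rewrite mxE.
have : forall i, i \in predT -> x i 0 * x i 0 = 0.
  apply/psumr_eq0P => [i _|]; first by rewrite -expr2 sqr_ge0.
  by [].
move=> H2; apply/matrixP => i j; rewrite ord1 mxE.
by have := H2 i isT; move/eqP; rewrite mulf_eq0 orbb => /eqP.
Qed.

Lemma sqnorm_ge0 k (x : 'cV[R]_k) : 0 <= (x^T *m x) 0 0.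
Proof. rewrite mxE; apply: sumr_ge0 => i _; by rewrite mxE -expr2 sqr_ge0. Qed.

End Gen.
Section Gen2.
Variable R : realType.

Lemma gram_eq0 k l (M : 'M[R]_(k, l)) : M^T *m M = 0 -> M = 0.
Proof.
move=> H; apply/matrixP => i j; rewrite mxE.
have /matrixP /(_ j j) := H; rewrite !mxE => H1.
have {}H1 : \sum_(t < k) M t j * M t j = 0.
  by rewrite -[RHS]H1; apply: eq_bigr => t _; rewrite mxE.
have : forall t, t \in predT -> M t j * M t j = 0.
  apply/psumr_eq0P => [t _|]; first by rewrite -expr2 sqr_ge0.
  by [].
by move/(_ i isT)/eqP; rewrite mulf_eq0 orbb => /eqP.
Qed.

Lemma mp_unique m n (A : 'M[R]_(m, n)) X Y :
  is_MP_pinv A X -> is_MP_pinv A Y -> X = Y.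
Proof.
case=> [X1 X2 X3 X4] [Y1 Y2 Y3 Y4].
have e1 : X = X *m X^T *m A^T by rewrite -mulmxA -trmx_mul X3 mulmxA X2.
have e2 : X *m X^T *m A^T = X *m (A *m X)^T *m (A *m Y)^T.
  by rewrite -{1}Y1 !trmx_mul !mulmxA.
have eX : X = X *m A *m Y by rewrite {1}e1 e2 X3 Y3 !mulmxA X2.
have f1 : Y = A^T *m Y^T *m Y by rewrite -trmx_mul Y4 Y2.
have f2 : A^T *m Y^T *m Y = (X *m A)^T *m (Y *m A)^T *m Y.
  by rewrite -{1}X1 !trmx_mul !mulmxA.
have eY : Y = X *m A *m Y.
  by rewrite {1}f1 f2 X4 Y4 -!mulmxA (mulmxA Y A Y) Y2.
by rewrite {1}eX; exact: esym eY.
Qed.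

Lemma pinv_eq m n (A : 'M[R]_(m, n)) X : is_MP_pinv A X -> pinv A = X.
Proof.
move=> HX; rewrite /pinv; apply: xget_unique => // Y HY; exact: mp_unique HY HX.
Qed.

Lemma schur_proj k N M (A : 'M[R]_k) (B : 'M[R]_(N, k)) (C : 'M[R]_(M, k)) :
  A = B^T *m B + C^T *m C -> A \in unitmx -> C *m B^T = 0 ->
  is_MP_pinv (B *m invmx A *m B^T) (B *m invmx A *m B^T).
Proof.
move=> eA uA CB.
set X := invmx A *m B^T.
have AX : A *m X = B^T by rewrite /X mulmxA mulmxV // mul1mx.
have CCX : C^T *m C *m X = 0.
  have h : C *m (A *m X) = 0 by rewrite AX.
  move: h; rewrite eA mulmxDl mulmxDr !mulmxA CB !mul0mx add0r => h.
  apply: gram_eq0.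
  move: h; rewrite -!mulmxA => h.
  by rewrite !trmx_mul !trmxK -!mulmxA h !mulmx0.
have BBX : B^T *m B *m X = B^T by rewrite -{2}AX eA mulmxDl CCX addr0.
have AT : A^T = A by rewrite eA linearD /= !trmx_mul !trmxK.
have PT : (B *m X)^T = B *m X.
  by rewrite trmx_mul trmx_mul trmxK trmx_inv AT mulmxA.
have PP : B *m X *m (B *m X) = B *m X.
  by rewrite -{1}PT trmx_mul mulmxA -(mulmxA _ B^T) -(mulmxA _ (B^T *m B)) BBX -trmx_mul PT.
rewrite -mulmxA -/X; split; rewrite ?PP //.
Qed.

End Gen2.
Section Conc.
Variable R : realType.

Lemma ind_sum (N k : nat) (F : nat -> R) :
  \sum_(j < N) F j * ((j : nat) == k)%:R = (k < N)%:R * F k.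
Proof.
elim: N => [|N IH]; first by rewrite big_ord0 ltn0 mul0r.
rewrite big_ord_recr /= IH.
have [->|hk] := eqVneq k N.
  by rewrite ltnn ltnSn mul0r add0r mulr1 mul1r.
by rewrite mulr0 addr0 ltnS (leq_eqVlt k) (negbTE hk).
Qed.

Ltac bcase :=
  repeat (match goal with |- context [ nat_of_bool ?b ] =>
    lazymatch b with true => fail | false => fail | _ => case: (boolP b) end end; intro);
  rewrite /=.

Lemma L1 (n : nat) : (\matrix_(j < n.-1, b < n) (j < b)%:R : 'M[R]_(n.-1, n)) *m Mdiff R n
   = - 1%:M.
Proof.
apply/matrixP => j b; rewrite !mxE.
under eq_bigr => i _ do rewrite !mxE mulrBr.
rewrite sumrB.
rewrite (ind_sum n b (fun i => (j < i)%:R)) (ind_sum n b.+1 (fun i => (j < i)%:R)).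
have hb := ltn_ord b; have hj := ltn_ord j.
rewrite -val_eqE /=.
bcase; try lia; ring.
Qed.


Lemma ind_sum2 (N i : nat) (F : nat -> R) :
  \sum_(j < N) F j * (i == (j : nat).+1)%:R = ((0 < i)%N && (i.-1 < N)%N)%:R * F i.-1.
Proof.
have e : forall j : nat, (i == j.+1) = ((j == i.-1) && (0 < i)%N).
  move=> j; case: i => [|i0] /=; first by rewrite andbF.
  by rewrite andbT eqSS eq_sym.
under eq_bigr => j _ do rewrite e -mulnb natrM mulrA.
rewrite -mulr_suml ind_sum -mulnb natrM; ring.
Qed.

Lemma ind_sum1 (N i : nat) (F : nat -> R) :
  \sum_(j < N) (i == (j : nat))%:R * F j = (i < N)%:R * F i.
Proof.
under eq_bigr => j _ do rewrite mulrC eq_sym.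
exact: ind_sum.
Qed.

Definition Tm n : 'M[R]_(n.-1, n) := \matrix_(j < n.-1, b < n) (j < b)%:R.
Definition ones n : 'rV[R]_n := const_mx 1.
Definition e0 n : 'cV[R]_n := \col_(i < n) ((i : nat) == 0)%:R.

Lemma L2 (n : nat) : Mdiff R n *m Tm n = e0 n *m ones n - 1%:M.
Proof.
apply/matrixP => i b; rewrite !mxE big_ord1 !mxE.
under eq_bigr => j _ do rewrite !mxE mulrBl.
rewrite sumrB (ind_sum1 n.-1 i (fun j => (j < b)%:R)).
under eq_bigr => j _ do rewrite mulrC.
rewrite (ind_sum2 n.-1 i (fun j => (j < b)%:R)).
have hb := ltn_ord b; have hi := ltn_ord i.
rewrite -val_eqE /=.
bcase; try lia; ring.
Qed.

Lemma L3 (n : nat) : ones n *m Mdiff R n = 0.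
Proof.
apply/matrixP => z j; rewrite !mxE.
under eq_bigr => i _ do rewrite !mxE mul1r.
rewrite sumrB.
under eq_bigr => i _ do rewrite -[_%:R]mul1r.
under [X in _ - X]eq_bigr => i _ do rewrite -[_%:R]mul1r.
rewrite (ind_sum n j (fun=> 1)) (ind_sum n j.+1 (fun=> 1)).
have hj := ltn_ord j.
bcase; try lia; ring.
Qed.

End Conc.
Lemma trN (R : realType) m k (A : 'M[R]_(m, k)) : (- A)^T = - A^T.
Proof. by apply/matrixP => i j; rewrite !mxE. Qed.

Lemma castN (R : realType) m1 m2 n1 n2 (e : (m1 = m2) * (n1 = n2)) (A : 'M[R]_(m1, n1)) :
  castmx e (- A) = - castmx e A.
Proof. by apply/matrixP => i j; rewrite !(castmxE, mxE). Qed.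

Lemma cast_mull (R : realType) p p' q r (e : p = p') (M : 'M[R]_(p, q)) (x : 'M[R]_(q, r)) :
  castmx (e, erefl q) M *m x = castmx (e, erefl r) (M *m x).
Proof. by case: p' / e; rewrite !castmx_id. Qed.

Definition cc (R : realType) (n : nat) : R := 1 / (1 / n%:R).
Definition Tmat (R : realType) (n : nat) : 'M[R]_(n.-1, n) := - (cc R n)^-1 *: Tm R n.

Lemma c_neq0 (R : realType) n : (0 < n)%N -> cc R n != 0.
Proof. by move=> hn; rewrite /cc !div1r invrK pnatr_eq0 -lt0n. Qed.

Lemma TD (R : realType) n : (0 < n)%N -> Tmat R n *m Bd R n = 1%:M.
Proof.
move=> hn.
rewrite /Tmat /Bd -/(cc R n) -scalemxAl -scalemxAr L1 scalerA mulNr mulVf ?c_neq0 //.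
by rewrite scaleN1r opprK.
Qed.

Lemma DT (R : realType) n : (0 < n)%N -> Bd R n *m Tmat R n = 1%:M - e0 R n *m ones R n.
Proof.
move=> hn.
rewrite /Tmat /Bd -/(cc R n) -scalemxAl -scalemxAr L2 scalerA mulrN mulfV ?c_neq0 //.
by rewrite scaleN1r opprB.
Qed.

Lemma oD (R : realType) n : ones R n *m Bd R n = 0.
Proof. by rewrite /Bd -scalemxAr L3 scaler0. Qed.

Lemma AN_sym (R : realType) n : (AN R n)^T = AN R n.
Proof. by rewrite /AN linearD /= !trmx_mul !trmxK. Qed.

Lemma CB0 (R : realType) n : Cbold R n *m (Bbold R n)^T = 0.
Proof.
rewrite /Cbold /Bbold tr_row_mx mul_row_col trmx_cast /= cast_mul2.
rewrite /Bux /Bvy /Bqx /Bqy !trN mulNmx mulmxN opprK mulmxN.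
rewrite -!trmx_mul !kron_mul !mul1mx !mulmx1.
by rewrite subrr.
Qed.

Lemma ker0 (R : realType) n (hn : (0 < n)%N) (v : 'cV[R]_(n * n.-1 + n * n.-1)) :
  AN R n *m v = 0 -> v = 0.
Proof.
move=> Av.
have h : (Bbold R n *m v)^T *m (Bbold R n *m v) + (Cbold R n *m v)^T *m (Cbold R n *m v) = 0.
  have : v^T *m (AN R n *m v) = 0 by rewrite Av mulmx0.
  by rewrite /AN mulmxDl mulmxDr !trmx_mul !mulmxA.
have /matrixP/(_ 0 0) := h; rewrite {1}mxE => h'.
have g1 := sqnorm_ge0 (Bbold R n *m v); have g2 := sqnorm_ge0 (Cbold R n *m v).
rewrite [RHS]mxE in h'.
have hB : Bbold R n *m v = 0.
  by apply: sqnorm_eq0; apply/matrixP => i j; rewrite !ord1 [RHS]mxE; lra.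
have hC : Cbold R n *m v = 0.
  by apply: sqnorm_eq0; apply/matrixP => i j; rewrite !ord1 [RHS]mxE; lra.
clear h h' g1 g2.
rewrite -[v]vsubmxK in hB hC *.
set u := usubmx v in hB hC *; set w := dsubmx v in hB hC *.
set D := Bd R n in hB hC *.
move: hC; rewrite /Cbold mul_row_col cast_mulr.
set w' := castmx _ w.
rewrite -(vecK u) -(vecK w').
set U := unvec u; set W := unvec w'.
rewrite /Bqx /Bqy -/D mulNmx !kron_tr !trmx1 !kron_vec trmx1 mulmx1 mul1mx trmxK.
move/eqP; rewrite addrC subr_eq0 => /eqP hC.
have WD : W *m D = D^T *m U by rewrite -(unvecK (W *m D)) hC unvecK.
set T := Tmat R n.
set p := T^T *m (W *m e0 R n).
set Psi := p *m ones R n + U *m T.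
have PD : Psi *m D = U.
  by rewrite /Psi mulmxDl -!mulmxA oD !mulmx0 add0r TD // mulmx1.
have DP : D^T *m Psi = W.
  rewrite /Psi mulmxDr !mulmxA -trmx_mul TD // trmx1 mul1mx -WD -(mulmxA W D T) DT //.
  by rewrite mulmxBr mulmx1 !mulmxA addrC subrK.
have eV : col_mx u w = - ((Bbold R n)^T *m vec Psi).
  rewrite /Bbold tr_row_mx trmx_cast /= mul_col_mx cast_mull /Bux /Bvy -/D !trN !mulNmx.
  rewrite !kron_tr !trmx1 !kron_vec !trmx1 !mulmx1 !mul1mx trmxK PD DP castN.
  rewrite /U /W !vecK /w'.
  have -> : castmx (mulnC n.-1 n, erefl) (castmx (esym (mulnC n.-1 n), erefl) w) = w.
    by apply/matrixP => i j; rewrite !castmxE; congr (w _ _); apply: val_inj.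
  by rewrite -opp_col_mx opprK.
rewrite /U vecK.
apply: sqnorm_eq0.
by rewrite {1}eV trN trmx_mul trmxK mulNmx -mulmxA hB mulmx0 oppr0.
Qed.

Lemma AN_unit (R : realType) n : (0 < n)%N -> AN R n \in unitmx.
Proof.
move=> hn.
rewrite -row_free_unit -kermx_eq0; apply/eqP/row_matrixP => i; rewrite row0.
set r := row i (kermx (AN R n)).
have hr : r *m AN R n = 0 by rewrite /r -row_mul mulmx_ker row0.
have : r^T = 0.
  apply: (ker0 hn); by rewrite -AN_sym -trmx_mul hr trmx0.
by move=> /(congr1 trmx); rewrite trmxK trmx0.
Qed.

Theorem corollary3 (R : realType) (n : nat) (hn : (2 <= n)%N) :
  pinv (SN R n) = SN R n.
Proof.
have hn0 : (0 < n)%N by lia.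
rewrite /SN; apply: pinv_eq.
apply: (@schur_proj R _ _ _ (AN R n) (Bbold R n) (Cbold R n)) => //.
  exact: AN_unit.
exact: CB0.
Qed.
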